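(* Let $P\subseteq\mathbb{R}^n$ be a rational polyhedron, let $f:\mathbb{R}^n\to\mathbb{R}$ be a polynomial of degree at most three, and let $\bar x\in P$ and $\bar v\in\operatorname{rec}P$ be such that $f(\bar x+\lambda\bar v)\to+\infty$ as $\lambda\to+\infty$ with $f(\bar x+\lambda\bar v)=\Theta(\lambda^3)$. Then for every $\epsilon>0$ there exist $\tilde x,\tilde v\in\mathbb{Q}^n$ with $\tilde x\in P$, $\tilde v\in\operatorname{rec}P$, $\|\bar x-\tilde x\|<\epsilon$, $\|\bar v-\tilde v\|<\epsilon$, such that $f(\tilde x+\lambda\tilde v)\to+\infty$ as $\lambda\to+\infty$ and $f(\tilde x+\lambda\tilde v)=\Theta(\lambda^3)$.
   Context: $\operatorname{rec}P$ denotes the recession cone of $P$, and $\|\cdot\|$ is the Euclidean norm. *)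

(* Defs.v *)
From HB Require Import structures.
From mathcomp Require Import all_boot all_order all_algebra.
From mathcomp Require Import reals.
From mathcomp Require Import mpoly.
Set Implicit Arguments. Unset Strict Implicit. Unset Printing Implicit Defensive.
Import Order.TTheory GRing.Theory Num.Theory.
Local Open Scope ring_scope.

Definition polyhedron (R : realType) (m n : nat)
  (A : 'M[rat]_(m, n)) (b : 'cV[rat]_m) : 'cV[R]_n -> Prop :=
  fun x => forall i : 'I_m, (map_mx ratr A *m x) i 0 <= ratr (b i 0).

Definition rec_cone (R : realType) (n : nat) (P : 'cV[R]_n -> Prop)
  : 'cV[R]_n -> Prop :=
  fun v => forall x, P x -> forall lam : R, 0 <= lam -> P (x + lam *: v).

Definition enorm (R : realType) (n : nat) (x : 'cV[R]_n) : R :=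
  Num.sqrt (\sum_(i < n) x i 0 ^+ 2).

Definition is_rational_vec (R : realType) (n : nat) (x : 'cV[R]_n) : Prop :=
  exists q : 'cV[rat]_n, x = map_mx ratr q.

Definition peval (R : realType) (n : nat) (f : {mpoly R[n]}) (x : 'cV[R]_n) : R :=
  f.@[fun i => x i 0].

Definition tends_pinfty (R : realType) (g : R -> R) : Prop :=
  forall M : R, exists L : R, forall lam : R, L <= lam -> M <= g lam.

Definition big_theta_cube (R : realType) (g : R -> R) : Prop :=
  exists c1 c2 L : R, [/\ 0 < c1, 0 < c2 &
    forall lam : R, L <= lam ->
      c1 * `|lam| ^+ 3 <= `|g lam| /\ `|g lam| <= c2 * `|lam| ^+ 3].

(* Main.v *)
Require Import Defs.
From HB Require Import structures.
From mathcomp Require Import all_boot all_order all_algebra.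
From mathcomp Require Import reals.
From mathcomp Require Import mpoly.
From mathcomp Require Import ring lra zify.
Import Order.TTheory GRing.Theory Num.Theory.
Local Open Scope ring_scope.
Set Implicit Arguments. Unset Strict Implicit.
Definition ratapp (R : realType) (eta r : R) : rat :=
  let N := (Num.truncn (eta^-1)).+1 in (Num.floor (r * N%:R))%:~R / N%:R.

Lemma ratappP (R : realType) (eta r : R) : 0 < eta -> `|r - ratr (ratapp eta r)| < eta.
Proof.
move=> he; rewrite /ratapp.
set N := (Num.truncn eta^-1).+1.
have hN : 0 < N%:R :> R by rewrite ltr0n.
have hNe : eta^-1 < N%:R :> R by apply: truncnS_gt.
rewrite fmorph_div rmorph_int rmorph_nat.
set z := Num.floor (r * N%:R).
have h1 : (z%:~R : R) <= r * N%:R by apply: floor_le.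
have h2 : r * N%:R < (z + 1)%:~R :> R by apply: floorD1_gt.
rewrite intrD in h2.
have e1 : r - z%:~R / N%:R = (r * N%:R - z%:~R) / N%:R by field; rewrite gt_eqF.
rewrite e1 normrM ger0_norm ?subr_ge0 // ger0_norm ?invr_ge0 ?ltW //.
have : eta^-1 * eta = 1 by rewrite mulVf // gt_eqF.
have : N%:R^-1 * N%:R = 1 :> R by rewrite mulVf // gt_eqF.
nra.
Qed.

Lemma ex_pos_lb (R : realType) (I : finType) (s : I -> R) :
  (forall i, 0 < s i) -> exists e : R, 0 < e /\ forall i, e <= s i.
Proof.
move=> hs.
suff [e [he H]] : exists e : R, 0 < e /\ forall i, i \in enum I -> e <= s i.
  by exists e; split => // i; apply: H; rewrite mem_enum.
elim: (enum I) => [|a r [e [he H]]]; first by exists 1.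
exists (Num.min (s a) e); split; first by rewrite lt_min hs he.
move=> i; rewrite inE => /orP [/eqP -> | hi]; first by rewrite ge_min lexx.
by rewrite ge_min H ?orbT.
Qed.

Lemma mul_col_bound (R : realType) m n (B : 'M[R]_(m,n)) (w : 'cV[R]_n) (e : R) i :
  (forall j, `|w j 0| <= e) -> `|(B *m w) i 0| <= e * \sum_j `|B i j|.
Proof.
move=> hw; rewrite mxE mulr_sumr.
apply: le_trans (ler_norm_sum _ _ _) _.
apply: ler_sum => j _; rewrite normrM mulrC.
by apply: ler_wpM2r.
Qed.

Lemma mul_row_bound (R : realType) p n (u : 'rV[R]_p) (B : 'M[R]_(p,n)) (e : R) j :
  (forall k, `|u 0 k| <= e) -> `|(u *m B) 0 j| <= e * \sum_k `|B k j|.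
Proof.
move=> hw; rewrite mxE mulr_sumr.
apply: le_trans (ler_norm_sum _ _ _) _.
apply: ler_sum => k _; rewrite normrM.
by apply: ler_wpM2r.
Qed.

Lemma poly_dense (R : realType) m n (A : 'M[rat]_(m,n)) (b : 'cV[rat]_m)
  (x : 'cV[R]_n) : polyhedron A b x -> forall del : R, 0 < del ->
  exists q : 'cV[rat]_n, polyhedron (R:=R) A b (map_mx ratr q) /\
    forall j, `|x j 0 - ratr (q j 0)| < del.
Proof.
move=> hx del hdel.
set A' := map_mx (ratr : rat -> R) A.
pose tight i := (A' *m x) i 0 == ratr (b i 0).
pose d : 'rV[rat]_m := \row_i (if tight i then 1 else 0).
pose M := diag_mx d *m A.
pose c := diag_mx d *m b.
have hMx : map_mx ratr M *m x = map_mx ratr c.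
  rewrite !map_mxM map_diag_mx -mulmxA !mul_diag_mx.
  apply/matrixP => i j; rewrite !mxE (ord1 j).
  rewrite /tight; case: eqP => [h|_]; last by rewrite !rmorph0 !mul0r.
  by move: h; rewrite /A' mxE => ->.
have hct : ((map_mx ratr c)^T <= (map_mx (ratr : rat -> R) M)^T)%MS.
  by apply/submxP; exists x^T; rewrite -hMx trmx_mul.
rewrite !map_trmx map_submx in hct.
pose y0 := (c^T *m pinvmx M^T).
have hy0 : y0 *m M^T = c^T by rewrite mulmxKpV.
have hker : ((x^T - map_mx ratr y0) <= kermx (map_mx (ratr : rat -> R) M^T))%MS.
  apply/sub_kermxP; rewrite mulmxBl -map_mxM hy0 -map_trmx -trmx_mul hMx.
  by rewrite map_trmx subrr.
rewrite -map_kermx in hker.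
have [z hz] := submxP hker.
set K := kermx M^T in hz.
set K' := map_mx (ratr : rat -> R) K in hz.
have hMw : forall (w : 'cV[R]_n) i, (map_mx ratr M *m w) i 0 =
    (if tight i then (A' *m w) i 0 else 0).
  move=> w i; rewrite map_mxM map_diag_mx -mulmxA mul_diag_mx !mxE.
  by case: (tight i); rewrite ?rmorph1 ?rmorph0 ?mul1r ?mul0r.
have hcw : forall i, (map_mx (ratr : rat -> R) c) i 0 =
    (if tight i then ratr (b i 0) else 0).
  move=> i; rewrite map_mxM map_diag_mx mul_diag_mx !mxE.
  by case: (tight i); rewrite ?rmorph1 ?rmorph0 ?mul1r ?mul0r.
pose SA i := \sum_j `|A' i j|.
have SA0 : forall i, 0 <= SA i by move=> i; apply: sumr_ge0 => j _.
pose s i := if tight i then 1 else (ratr (b i 0) - (A' *m x) i 0) / (1 + SA i).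
have hs : forall i, 0 < s i.
  move=> i; rewrite /s; case E: (tight i) => //.
  have h1 := hx i; rewrite /tight in E.
  apply: divr_gt0; last by have := SA0 i; lra.
  rewrite subr_gt0 lt_def h1 andbT; apply/negP => /eqP h2.
  by move: E; rewrite h2 eqxx.
have [e1 [he1 He1]] := ex_pos_lb hs.
pose dd := Num.min (del / 2) e1.
have hdd : 0 < dd by rewrite lt_min he1 andbT divr_gt0.
pose SK j := \sum_k `|K' k j|.
have SK0 : forall j, 0 <= SK j by move=> j; apply: sumr_ge0 => k _.
have hs2 : forall j, 0 < dd / (1 + SK j).
  by move=> j; apply: divr_gt0 => //; have := SK0 j; lra.
have [eta [heta Heta]] := ex_pos_lb hs2.
pose zr : 'rV[rat]_n := \row_k ratapp eta (z 0 k).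
pose q := (y0 + zr *m K)^T.
have hqT : (map_mx (ratr : rat -> R) q)^T = map_mx ratr y0 + map_mx ratr zr *m K'.
  by rewrite /q map_trmx trmxK map_mxD; congr (_ + _); apply: map_mxM.
have E : forall j, map_mx (ratr : rat -> R) q j 0 - x j 0 =
    ((map_mx ratr zr - z) *m K') 0 j.
  move=> j.
  have -> : map_mx (ratr : rat -> R) q j 0 - x j 0 =
     ((map_mx (ratr : rat -> R) q)^T - x^T) 0 j by rewrite !mxE.
  have hx' : x^T = map_mx ratr y0 + z *m K' by rewrite -hz addrC subrK.
  by rewrite hqT hx' mulmxBl opprD addrACA subrr add0r.
have Ebd : forall j, `|map_mx (ratr : rat -> R) q j 0 - x j 0| <= dd.
  move=> j; rewrite E.
  have hb : `|((map_mx ratr zr - z) *m K') 0 j| <= eta * SK j.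
    apply: mul_row_bound => k; rewrite !mxE distrC ltW //; exact: ratappP.
  have h1 := Heta j; have h2 := SK0 j.
  have h3 : dd / (1 + SK j) * (1 + SK j) = dd by field; have := SK0 j; lra.
  nra.
have Ry : map_mx ratr M *m map_mx (ratr : rat -> R) q = map_mx ratr c.
  apply: trmx_inj; rewrite trmx_mul hqT !map_trmx mulmxDl -mulmxA.
  by rewrite -!map_mxM mulmx_ker hy0 mulmx0 map_mx0 addr0.
exists q; split; last first.
  move=> j; have := Ebd j; rewrite mxE distrC.
  have : dd <= del / 2 by rewrite ge_min lexx.
  lra.
move=> i.
have hRi := hMw (map_mx ratr q) i; rewrite Ry hcw in hRi.
case E2: (tight i) hRi => hRi.
  by rewrite -hRi.
have hdiff : (A' *m (map_mx ratr q - x)) i 0 =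
    (A' *m map_mx ratr q) i 0 - (A' *m x) i 0.
  by rewrite mulmxBr !mxE.
have hb : `|(A' *m (map_mx ratr q - x)) i 0| <= dd * SA i.
  by apply: mul_col_bound => j; move: (Ebd j); rewrite !mxE.
have h1 := He1 i; rewrite /s E2 in h1.
have h2 : dd <= e1 by rewrite ge_min lexx orbT.
have h3 := SA0 i.
set sl := ratr (b i 0) - (A' *m x) i 0 in h1.
have hsl : 0 <= sl by rewrite subr_ge0; exact: hx.
have h4 : sl / (1 + SA i) * (1 + SA i) = sl by field; lra.
have h5 := ler_norm ((A' *m (map_mx ratr q - x)) i 0).
change ((A' *m map_mx ratr q) i 0 <= ratr (b i 0)).
set t := sl / (1 + SA i) in h1 h4.
have ht : 0 <= t by rewrite /t divr_ge0 //; lra.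
have h6 : dd * SA i <= t * SA i by apply: ler_wpM2r => //; apply: le_trans h1.
move: hdiff hb h5 h6 h4; rewrite /sl.
set D := (A' *m (map_mx ratr q - x)) i 0.
nra.
Qed.

Lemma mul_entry_lin (R : realType) m n (B : 'M[R]_(m,n)) (x v : 'cV[R]_n) (lam : R) i :
  (B *m (x + lam *: v)) i 0 = (B *m x) i 0 + lam * (B *m v) i 0.
Proof. by rewrite mulmxDr -scalemxAr !mxE. Qed.

Lemma rec_to_cone (R : realType) m n (A : 'M[rat]_(m,n)) (b : 'cV[rat]_m) (x v : 'cV[R]_n) :
  polyhedron A b x -> rec_cone (polyhedron A b) v -> polyhedron (R:=R) A 0 v.
Proof.
move=> hx hv i.
have -> : ratr ((0 : 'cV[rat]_m) i 0) = 0 :> R by rewrite mxE rmorph0.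
rewrite leNgt; apply/negP => hpos.
set a := (map_mx ratr A *m v) i 0 in hpos.
set s := ratr (b i 0) - (map_mx ratr A *m x) i 0.
have hs : 0 <= s by rewrite subr_ge0; exact: hx.
have := hv x hx ((s + 1) / a) (divr_ge0 (addr_ge0 hs ler01) (ltW hpos)) i.
rewrite mul_entry_lin -/a.
have -> : (s + 1) / a * a = s + 1 by field; rewrite gt_eqF.
rewrite /s; lra.
Qed.

Lemma cone_to_rec (R : realType) m n (A : 'M[rat]_(m,n)) (b : 'cV[rat]_m) (v : 'cV[R]_n) :
  polyhedron (R:=R) A 0 v -> rec_cone (polyhedron A b) v.
Proof.
move=> hv x hx lam hlam i; rewrite mul_entry_lin.
have := hv i.
have -> : ratr ((0 : 'cV[rat]_m) i 0) = 0 :> R by rewrite mxE rmorph0.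
move=> h.
have := hx i; nra.
Qed.

Lemma size_exp_lin (R : realType) (l : {poly R}) k :
  (size l <= 2)%N -> (size (l ^+ k)%R <= k.+1)%N.
Proof.
move=> hl; elim: k => [|k IH]; first by rewrite expr0 size_poly1.
rewrite exprS; apply: leq_trans (size_mul_leq _ _) _; lia.
Qed.

Lemma size_prod_lin (R : realType) (I : Type) (r : seq I) (l : I -> {poly R}) (m : I -> nat) :
  (forall i, (size (l i) <= 2)%N) ->
  (size (\prod_(i <- r) l i ^+ m i)%R <= (\sum_(i <- r) m i).+1)%N.
Proof.
move=> hl; elim: r => [|a r IH]; first by rewrite !big_nil size_poly1.
rewrite !big_cons; apply: leq_trans (size_mul_leq _ _) _.
have := size_exp_lin (m a) (hl a); lia.
Qed.

Lemma cubic_rep (R : realType) n (f : {mpoly R[n]}) (x v : 'cV[R]_n) :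
  (msize f <= 4)%N -> exists a0 a1 a2 a3 : R, forall lam,
    peval f (x + lam *: v) = a0 + a1 * lam + a2 * lam ^+ 2 + a3 * lam ^+ 3.
Proof.
move=> hf.
pose l (i : 'I_n) : {poly R} := (x i 0)%:P + (v i 0) *: 'X.
have hl : forall i, (size (l i) <= 2)%N.
  move=> i; apply: leq_trans (size_add _ _) _; rewrite geq_max size_polyC.
  apply/andP; split; first by case: (_ != _).
  by rewrite (leq_trans (size_scale_leq _ _)) // size_polyX.
pose q := \sum_(m <- msupp f) f@_m *: \prod_(i < n) l i ^+ m i.
have hq : forall lam, q.[lam] = peval f (x + lam *: v).
  move=> lam; rewrite /peval mevalE /q horner_sum; apply: eq_bigr => mm _.
  rewrite hornerZ horner_prod; congr (_ * _); apply: eq_bigr => j _.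
  by rewrite horner_exp /l hornerD hornerC hornerZ hornerX !mxE mulrC.
have hsq : (size q <= 4)%N.
  rewrite /q big_seq; apply: (big_ind (fun p : {poly R} => size p <= 4)%N).
  - by rewrite size_poly0.
  - by move=> p1 p2 h1 h2; apply: leq_trans (size_add _ _) _; rewrite geq_max h1 h2.
  move=> mm hm; apply: leq_trans (size_scale_leq _ _) _.
  apply: leq_trans (size_prod_lin _ (fun i => mm i) hl) _.
  by have := msize_mdeg_lt hm; rewrite mdegE => h; apply: leq_trans h hf.
exists q`_0, q`_1, q`_2, q`_3 => lam.
rewrite -hq (horner_coef_wide _ hsq) !big_ord_recr big_ord0 /=.
by rewrite expr0 expr1 mulr1 add0r.
Qed.

Lemma quad_bound (R : realType) (a0 a1 a2 lam : R) : 1 <= lam ->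
  `|a0 + a1 * lam + a2 * lam ^+ 2| <= (`|a0| + `|a1| + `|a2|) * lam ^+ 2.
Proof.
move=> h1.
have hl : 0 <= lam by lra.
apply: le_trans (ler_normD _ _) _.
have := ler_normD a0 (a1 * lam).
rewrite !normrM ?normrX (ger0_norm hl) expr2.
have e1 : 1 <= lam * lam by nra.
have e2 : lam <= lam * lam by nra.
have := normr_ge0 a0; have := normr_ge0 a1; have := normr_ge0 a2.
nra.
Qed.

Lemma cubic_pos (R : realType) (g : R -> R) (a0 a1 a2 a3 : R) :
  (forall lam, g lam = a0 + a1 * lam + a2 * lam ^+ 2 + a3 * lam ^+ 3) ->
  0 < a3 -> tends_pinfty g /\ big_theta_cube g.
Proof.
move=> hg ha.
pose S := `|a0| + `|a1| + `|a2|.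
have hS : 0 <= S by rewrite /S; have := normr_ge0 a0; have := normr_ge0 a1; have := normr_ge0 a2; lra.
pose L := 1 + 2 * S / a3.
have hL1 : 1 <= L by rewrite /L lerDl; apply: divr_ge0 => //; lra.
have key : forall lam, L <= lam ->
    a3 / 2 * lam ^+ 3 <= g lam /\ g lam <= 3 * a3 / 2 * lam ^+ 3.
  move=> lam hlam.
  have h1 : 1 <= lam by lra.
  have hq := quad_bound a0 a1 a2 h1; rewrite -/S in hq.
  have h2 : S <= a3 * lam / 2.
    have : 2 * S / a3 * a3 = 2 * S by field; rewrite gt_eqF.
    rewrite /L in hlam; nra.
  have h3 : S * lam ^+ 2 <= a3 / 2 * lam ^+ 3.
    rewrite exprS mulrA [_ * lam * _]mulrC -[X in _ <= X]mulrA.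
    have : 0 <= lam ^+ 2 by rewrite exprn_ge0 //; lra.
    nra.
  rewrite hg; move: hq h3; set r := a0 + a1 * lam + a2 * lam ^+ 2.
  have := ler_norm r; have := ler_norm (- r); rewrite normrN.
  lra.
split.
  move=> M; exists (Num.max L (1 + 2 * `|M| / a3)) => lam.
  rewrite ge_max => /andP [hl1 hl2].
  have [k1 _] := key lam hl1.
  have hlam : 1 <= lam by lra.
  have h3 : lam <= lam ^+ 3 by rewrite !exprS expr0 mulr1; nra.
  have h4 : 2 * `|M| / a3 * a3 = 2 * `|M| by field; rewrite gt_eqF.
  have h5 := ler_norm M; have h6 := normr_ge0 M.
  have h7 : 0 <= 2 * `|M| / a3 by apply: divr_ge0 => //; lra.
  nra.
exists (a3 / 2), (3 * a3 / 2), L; split; [by apply: divr_gt0 | by apply: divr_gt0; lra |].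
move=> lam hlam; have [k1 k2] := key lam hlam.
have h0 : 0 <= lam by lra.
rewrite (ger0_norm h0).
have : 0 <= lam ^+ 3 by apply: exprn_ge0.
have : 0 <= g lam by nra.
move=> hg0 _; rewrite (ger0_norm hg0); lra.
Qed.

Lemma cubic_lead (R : realType) (g : R -> R) (a0 a1 a2 a3 : R) :
  (forall lam, g lam = a0 + a1 * lam + a2 * lam ^+ 2 + a3 * lam ^+ 3) ->
  tends_pinfty g -> big_theta_cube g -> 0 < a3.
Proof.
move=> hg ht [c1 [c2 [L [hc1 hc2 hL]]]].
rewrite ltNge; apply/negP => ha.
case: (ltgtP a3 0) => [hneg | hpos | hz].
- have hg' : forall lam, (fun l => - g l) lam =
      - a0 + - a1 * lam + - a2 * lam ^+ 2 + - a3 * lam ^+ 3.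
    by move=> l /=; rewrite hg; ring.
  have [ht2 _] := cubic_pos hg' (ltac:(lra)).
  have [L1 H1] := ht 1; have [L2 H2] := ht2 1.
  have := H1 (Num.max L1 L2); have := H2 (Num.max L1 L2).
  rewrite !le_max !lexx ?orbT /= => h1 h2.
  have := h1 isT; have := h2 isT; lra.
- lra.
pose S := `|a0| + `|a1| + `|a2|.
have hS : 0 <= S by rewrite /S; have := normr_ge0 a0; have := normr_ge0 a1; have := normr_ge0 a2; lra.
pose lam := Num.max (Num.max L 1) (S / c1 + 1).
have hl1 : L <= lam by rewrite /lam !le_max lexx.
have hl2 : 1 <= lam by rewrite /lam !le_max lexx orbT.
have hl3 : S / c1 + 1 <= lam by rewrite /lam le_max lexx orbT.
have [k1 _] := hL lam hl1.
have hq := quad_bound a0 a1 a2 hl2; rewrite -/S in hq.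
rewrite hg hz mul0r addr0 in k1.
have h0 : 0 <= lam by lra.
rewrite (ger0_norm h0) in k1.
have e : S / c1 * c1 = S by field; rewrite gt_eqF.
have : 0 < lam ^+ 2 by rewrite exprn_gt0 //; lra.
rewrite exprS in k1.
clearbody lam; move=> hp.
have k2 : (c1 * lam) * lam ^+ 2 <= S * lam ^+ 2 by rewrite -mulrA; lra.
have k3 : c1 * lam <= S by rewrite -(ler_pM2r hp).
have k4 : c1 * (S / c1 + 1) <= c1 * lam by rewrite ler_pM2l.
have k5 : c1 * (S / c1 + 1) = S + c1 by rewrite mulrDr mulr1 mulrC e.
lra.
Qed.

Definition cont_at (R : realType) n (F : 'cV[R]_n -> R) (y0 : 'cV[R]_n) :=
  forall e : R, 0 < e -> exists d : R, 0 < d /\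
    forall y : 'cV[R]_n, (forall j, `|y j 0 - y0 j 0| < d) -> `|F y - F y0| < e.

Lemma cont_const (R : realType) n (c : R) (y0 : 'cV[R]_n) : cont_at (fun _ => c) y0.
Proof. by move=> e he; exists 1; split => // y _; rewrite subrr normr0. Qed.

Lemma cont_coord (R : realType) n (j : 'I_n) (y0 : 'cV[R]_n) : cont_at (fun y => y j 0) y0.
Proof. by move=> e he; exists e; split => // y H; apply: H. Qed.

Lemma cont_add (R : realType) n (F G : 'cV[R]_n -> R) y0 :
  cont_at F y0 -> cont_at G y0 -> cont_at (fun y => F y + G y) y0.
Proof.
move=> hF hG e he.
have he2 : 0 < e / 2 by apply: divr_gt0.
have [d1 [hd1 H1]] := hF _ he2; have [d2 [hd2 H2]] := hG _ he2.
exists (Num.min d1 d2); split; first by rewrite lt_min hd1.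
move=> y hy.
have h1 : `|F y - F y0| < e / 2 by apply: H1 => j; have := hy j; rewrite lt_min => /andP [].
have h2 : `|G y - G y0| < e / 2 by apply: H2 => j; have := hy j; rewrite lt_min => /andP [].
have -> : F y + G y - (F y0 + G y0) = (F y - F y0) + (G y - G y0) by ring.
apply: le_lt_trans (ler_normD _ _) _; lra.
Qed.

Lemma cont_mul (R : realType) n (F G : 'cV[R]_n -> R) y0 :
  cont_at F y0 -> cont_at G y0 -> cont_at (fun y => F y * G y) y0.
Proof.
move=> hF hG e he.
pose K := 1 + `|F y0| + `|G y0|.
have hK : 0 < K by rewrite /K; have := normr_ge0 (F y0); have := normr_ge0 (G y0); lra.
pose e' := Num.min 1 (e / (2 * K)).
have he' : 0 < e' by rewrite lt_min ltr01 /= divr_gt0 // mulr_gt0.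
have he'1 : e' <= 1 by rewrite ge_min lexx.
have he'K : e' * K <= e / 2.
  have : e' <= e / (2 * K) by rewrite ge_min lexx orbT.
  have : e / (2 * K) * K = e / 2 by field; rewrite gt_eqF.
  nra.
have [d1 [hd1 H1]] := hF _ he'; have [d2 [hd2 H2]] := hG _ he'.
exists (Num.min d1 d2); split; first by rewrite lt_min hd1.
move=> y hy.
have h1 : `|F y - F y0| < e' by apply: H1 => j; have := hy j; rewrite lt_min => /andP [].
have h2 : `|G y - G y0| < e' by apply: H2 => j; have := hy j; rewrite lt_min => /andP [].
have -> : F y * G y - F y0 * G y0 =
  (F y - F y0) * (G y - G y0) + (F y - F y0) * G y0 + F y0 * (G y - G y0) by ring.
set u := F y - F y0 in h1 *; set w := G y - G y0 in h2 *.
apply: le_lt_trans (ler_normD _ _) _.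
have := ler_normD (u * w) (u * G y0).
rewrite !normrM.
have := normr_ge0 u; have := normr_ge0 w; have := normr_ge0 (F y0); have := normr_ge0 (G y0).
rewrite /K in he'K.
nra.
Qed.

Lemma cont_ext (R : realType) n (F G : 'cV[R]_n -> R) y0 :
  (forall y, F y = G y) -> cont_at F y0 -> cont_at G y0.
Proof.
move=> h hF e he; have [d [hd H]] := hF e he; exists d; split => // y hy.
by rewrite -!h; apply: H.
Qed.

Lemma cont_sum (R : realType) n (I : Type) (r : seq I) (F : I -> 'cV[R]_n -> R) y0 :
  (forall i, cont_at (F i) y0) -> cont_at (fun y => \sum_(i <- r) F i y) y0.
Proof.
move=> hF; elim: r => [|a r IH].
  by apply: (cont_ext (F := fun _ => _)) (cont_const _ _) => y; rewrite big_nil.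
by apply: cont_ext (cont_add (hF a) IH) => y; rewrite big_cons.
Qed.

Lemma cont_prod (R : realType) n (I : Type) (r : seq I) (F : I -> 'cV[R]_n -> R) y0 :
  (forall i, cont_at (F i) y0) -> cont_at (fun y => \prod_(i <- r) F i y) y0.
Proof.
move=> hF; elim: r => [|a r IH].
  by apply: (cont_ext (F := fun _ => _)) (cont_const _ _) => y; rewrite big_nil.
by apply: cont_ext (cont_mul (hF a) IH) => y; rewrite big_cons.
Qed.

Lemma cont_exp (R : realType) n (F : 'cV[R]_n -> R) y0 k :
  cont_at F y0 -> cont_at (fun y => F y ^+ k) y0.
Proof.
move=> hF; elim: k => [|k IH].
  by apply: (cont_ext (F := fun _ => _)) (cont_const _ _) => y; rewrite expr0.
by apply: cont_ext (cont_mul hF IH) => y; rewrite exprS.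
Qed.

Lemma cont_peval (R : realType) n (f : {mpoly R[n]}) y0 : cont_at (peval f) y0.
Proof.
apply: (cont_ext (F := fun y => \sum_(m <- msupp f) f@_m * \prod_(i < n) y i 0 ^+ m i)).
  by move=> y; rewrite /peval mevalE.
apply: cont_sum => m; apply: cont_mul; first exact: cont_const.
apply: cont_prod => i; apply: cont_exp; exact: cont_coord.
Qed.

Lemma enorm_small (R : realType) n (d : 'cV[R]_n) (eps : R) : 0 < eps ->
  (forall j, `|d j 0| < eps / (n%:R + 1)) -> enorm d < eps.
Proof.
move=> he hd.
set eta := eps / (n%:R + 1).
have hN : 0 <= n%:R :> R by rewrite ler0n.
have heta : eta * (n%:R + 1) = eps by rewrite /eta; field; lra.
have hS : \sum_(i < n) d i 0 ^+ 2 <= \sum_(i < n) eta ^+ 2.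
  apply: ler_sum => i _.
  have := hd i; have := ler_norm (d i 0); have := ler_norm (- d i 0); rewrite normrN.
  move=> h1 h2 h3.
  rewrite -/eta in h3.
  have k1 : 0 < eta - d i 0 by lra.
  have k2 : 0 < eta + d i 0 by lra.
  have := mulr_gt0 k1 k2; rewrite !expr2; nra.
rewrite sumr_const card_ord in hS.
rewrite /enorm -[X in _ < X](@ger0_norm _ eps) ?ltW // -sqrtr_sqr ltr_sqrt ?exprn_gt0 //.
apply: le_lt_trans hS _.
rewrite -mulr_natr.
have hp : 0 < eta by rewrite /eta divr_gt0 //; lra.
rewrite -heta; nra.
Qed.

Lemma close_comb (R : realType) n (x v xb vb : 'cV[R]_n) (k del : R) :
  0 <= k <= 3 -> (forall j, `|x j 0 - xb j 0| < del) -> (forall j, `|v j 0 - vb j 0| < del) ->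
  forall j, `|(x + k *: v) j 0 - (xb + k *: vb) j 0| < 4 * del.
Proof.
move=> /andP [hk0 hk3] hx hv j; rewrite !mxE.
have -> : x j 0 + k * v j 0 - (xb j 0 + k * vb j 0) = (x j 0 - xb j 0) + k * (v j 0 - vb j 0) by ring.
apply: le_lt_trans (ler_normD _ _) _.
rewrite normrM (ger0_norm hk0).
have := hx j; have := hv j; have := normr_ge0 (v j 0 - vb j 0).
nra.
Qed.

Unset Implicit Arguments.
Set Strict Implicit.

Theorem proposition5 (R : realType) (m n : nat)
  (A : 'M[rat]_(m, n)) (b : 'cV[rat]_m) (f : {mpoly R[n]})
  (xb vb : 'cV[R]_n) :
  (msize f <= 4)%N ->
  polyhedron (R:=R) A b xb ->
  rec_cone (polyhedron (R:=R) A b) vb ->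
  tends_pinfty (fun lam : R => peval f (xb + lam *: vb)) ->
  big_theta_cube (fun lam : R => peval f (xb + lam *: vb)) ->
  forall eps : R, 0 < eps ->
  exists xt vt : 'cV[R]_n,
    [/\ is_rational_vec xt, is_rational_vec vt,
        polyhedron (R:=R) A b xt & rec_cone (polyhedron (R:=R) A b) vt] /\
    [/\ enorm (xb - xt) < eps, enorm (vb - vt) < eps,
        tends_pinfty (fun lam : R => peval f (xt + lam *: vt)) &
        big_theta_cube (fun lam : R => peval f (xt + lam *: vt))].
Proof.
move=> hf hxb hvb ht hth eps heps.
pose D3 (x v : 'cV[R]_n) := (peval f (x + 3 *: v) - 3 * peval f (x + 2 *: v)
   + 3 * peval f (x + 1 *: v) - peval f (x + 0 *: v)) / 6.
have D3E : forall x v (a0 a1 a2 a3 : R),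
    (forall lam, peval f (x + lam *: v) = a0 + a1 * lam + a2 * lam ^+ 2 + a3 * lam ^+ 3) ->
    D3 x v = a3.
  by move=> x v a0 a1 a2 a3 h; rewrite /D3 !h; field.
have [a0 [a1 [a2 [a3 hrep]]]] := cubic_rep xb vb hf.
have ha3 := cubic_lead hrep ht hth.
have hD : 0 < D3 xb vb by rewrite (D3E _ _ _ _ _ _ hrep).
set e := D3 xb vb / 2.
have he : 0 < e by rewrite /e divr_gt0.
have [d0 [hd0 H0]] := cont_peval f (xb + 0 *: vb) he.
have [d1 [hd1 H1]] := cont_peval f (xb + 1 *: vb) he.
have [d2 [hd2 H2]] := cont_peval f (xb + 2 *: vb) he.
have [d3 [hd3 H3]] := cont_peval f (xb + 3 *: vb) he.
pose dl := Num.min (Num.min d0 d1) (Num.min d2 d3).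
have hdl : 0 < dl by rewrite /dl !lt_min hd0 hd1 hd2 hd3.
have hdl0 : dl <= d0 by rewrite /dl !ge_min lexx.
have hdl1 : dl <= d1 by rewrite /dl !ge_min lexx !orbT.
have hdl2 : dl <= d2 by rewrite /dl !ge_min lexx !orbT.
have hdl3 : dl <= d3 by rewrite /dl !ge_min lexx !orbT.
pose del := Num.min (dl / 4) (eps / (n%:R + 1)).
have hdel : 0 < del.
  rewrite /del lt_min divr_gt0 //= divr_gt0 //.
  have : 0 <= n%:R :> R by rewrite ler0n.
  lra.
have hdel1 : del <= dl / 4 by rewrite /del ge_min lexx.
have hdel2 : del <= eps / (n%:R + 1) by rewrite /del ge_min lexx orbT.
have hconeb := rec_to_cone hxb hvb.
have [qx [hqx1 hqx2]] := poly_dense hxb hdel.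
have [qv [hqv1 hqv2]] := poly_dense hconeb hdel.
pose xt := map_mx (ratr : rat -> R) qx; pose vt := map_mx (ratr : rat -> R) qv.
have cx : forall j, `|xt j 0 - xb j 0| < del by move=> j; rewrite /xt mxE distrC.
have cv : forall j, `|vt j 0 - vb j 0| < del by move=> j; rewrite /vt mxE distrC.
have ck : forall (k d : R), 0 <= k <= 3 -> dl <= d ->
    forall j, `|(xt + k *: vt) j 0 - (xb + k *: vb) j 0| < d.
  move=> k d hk hd j; have := close_comb hk cx cv j; lra.
have hD' : 0 < D3 xt vt.
  have g0 := H0 _ (ck 0 d0 (ltac:(rewrite lexx; lra)) hdl0).
  have g1 := H1 _ (ck 1 d1 (ltac:(lra)) hdl1).
  have g2 := H2 _ (ck 2 d2 (ltac:(lra)) hdl2).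
  have g3 := H3 _ (ck 3 d3 (ltac:(lra)) hdl3).
  move: hD g0 g1 g2 g3; rewrite /e /D3 !ltr_norml.
  move=> hD /andP [? ?] /andP [? ?] /andP [? ?] /andP [? ?]; lra.
have [b0 [b1 [b2 [b3 hrep']]]] := cubic_rep xt vt hf.
have hb3 : 0 < b3 by rewrite -(D3E _ _ _ _ _ _ hrep').
have [T1 T2] := cubic_pos hrep' hb3.
exists xt, vt; split; split => //.
- by exists qx.
- by exists qv.
- exact: cone_to_rec.
- apply: enorm_small => // j; rewrite !mxE; apply: lt_le_trans hdel2; exact: hqx2.
- apply: enorm_small => // j; rewrite !mxE; apply: lt_le_trans hdel2; exact: hqv2.
Qed.
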